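(* A homomorphism $h:\mathbf A\to\mathbf B$ of $\sigma$-structures is a non-retraction if and only if there is a component $\mathbf C$ of $\mathbf B$ such that for no substructure $\mathbf D\subseteq\mathbf A$ is the restriction of $h$ to $\mathbf D$ an isomorphism $\mathbf D\to\mathbf C$.
   Context: A type $\sigma$ is a finite set of relation symbols with arities; a $\sigma$-structure $\mathbf A$ is a finite set $V(\mathbf A)$ with an $r$-ary relation $R(\mathbf A)$ for each $R$ of arity $r$; homomorphisms are relation-preserving maps. $\mathbf A$ is a substructure of $\mathbf B$ if $V(\mathbf A)\subseteq V(\mathbf B)$ and $R(\mathbf A)\subseteq R(\mathbf B)$ for all $R$. The incidence multigraph of $\mathbf B$ is bipartite with parts $V(\mathbf B)$ and the blocks $(R,(x_1,\dots,x_r))$, $(x_1,\dots,x_r)\in R(\mathbf B)$, with an edge from $x_i$ to the block for each $i$; the components of $\mathbf B$ are the substructures determined by the connected components of this multigraph. A homomorphism $h:\mathbf A\to\mathbf B$ is a retraction if there is a homomorphism $g:\mathbf B\to\mathbf A$ with $h\circ g$ the identity of $\mathbf B$; otherwise it is a non-retraction. *)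

(* Defs.v *)
From mathcomp Require Import all_boot.
Set Implicit Arguments. Unset Strict Implicit. Unset Printing Implicit Defensive.

Record struc (sigma : finType) (ar : sigma -> nat) := Struc {
  sV : finType;
  sR : forall s : sigma, {set (ar s).-tuple sV}
}.
Arguments sV {sigma ar}.
Arguments sR {sigma ar}.

Section Defs.
Variables (sigma : finType) (ar : sigma -> nat).

Definition is_hom (A B : struc ar) (h : sV A -> sV B) : Prop :=
  forall s (t : (ar s).-tuple (sV A)), t \in sR A s -> map_tuple h t \in sR B s.

Definition retraction (A B : struc ar) (h : sV A -> sV B) : Prop :=
  exists g : sV B -> sV A, is_hom g /\ forall y, h (g y) = y.

Definition is_substr (A : struc ar) (VD : {set sV A})
    (RD : forall s, {set (ar s).-tuple (sV A)}) : Prop :=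
  forall s, RD s \subset sR A s /\
    (forall t : (ar s).-tuple (sV A), t \in RD s -> forall x, x \in t -> x \in VD).

(* blocks of B (possibly not in a relation) *)
Definition block (B : struc ar) := {s : sigma & (ar s).-tuple (sV B)}.

(* nodes of the incidence multigraph: vertices and blocks *)
Definition node (B : struc ar) := (sV B + block B)%type.

Definition is_block (B : struc ar) (b : block B) : bool := tagged b \in sR B (tag b).

Definition valid_node (B : struc ar) (n : node B) : bool :=
  match n with inl _ => true | inr b => is_block b end.

(* incidence relation (multiplicities are irrelevant for connectivity) *)
Definition inc (B : struc ar) : rel (node B) := fun u v =>
  match u, v with
  | inl x, inr b => is_block b && (x \in tagged b)
  | inr b, inl x => is_block b && (x \in tagged b)
  | _, _ => false
  end.

Definition compV (B : struc ar) (n : node B) : {set sV B} :=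
  [set x | connect (@inc B) n (inl x)].
Definition compR (B : struc ar) (n : node B) (s : sigma) : {set (ar s).-tuple (sV B)} :=
  [set t | (t \in sR B s) && connect (@inc B) n (inr (Tagged (fun s => (ar s).-tuple (sV B)) t))].

Definition restr_iso (A B : struc ar) (h : sV A -> sV B)
    (VD : {set sV A}) (RD : forall s, {set (ar s).-tuple (sV A)})
    (VC : {set sV B}) (RC : forall s, {set (ar s).-tuple (sV B)}) : Prop :=
  {in VD &, injective h} /\ h @: VD = VC /\
  forall s (t : (ar s).-tuple (sV A)), (forall x, x \in t -> x \in VD) ->
    (t \in RD s) = (map_tuple h t \in RC s).

End Defs.

(* Main.v *)
Require Import Defs.
From mathcomp Require Import all_boot.
From Stdlib Require Import Classical ClassicalEpsilon.

Set Implicit Arguments. Unset Strict Implicit. Unset Printing Implicit Defensive.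

Section P.
Variables (sigma : finType) (ar : sigma -> nat).

Lemma inc_sym (B : struc ar) : symmetric (@inc _ _ B).
Proof. by move=> [x|b] [y|c]. Qed.

Lemma connect_sym_inc (B : struc ar) : connect_sym (@inc _ _ B).
Proof. exact: sym_connect_sym (@inc_sym B). Qed.

Lemma inR_inV (B : struc ar) (n : node B) s (t : (ar s).-tuple (sV B)) x :
  t \in compR n s -> x \in t -> x \in compV n.
Proof.
rewrite !inE => /andP[tR cn] xt.
apply: connect_trans cn _; apply: connect1 => /=.
by rewrite /is_block /= tR.
Qed.

Lemma dir1 (A B : struc ar) (h : sV A -> sV B) (n : node B) :
  retraction h ->
  exists (VD : {set sV A}) (RD : forall s, {set (ar s).-tuple (sV A)}),
      is_substr VD RD /\ restr_iso h VD RD (compV n) (compR n).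
Proof.
move=> [g [ghom hg]].
exists (g @: compV n), (fun s => [set map_tuple g t | t in compR n s]).
split.
  move=> s; split.
    apply/subsetP => u /imsetP[t tC ->]; apply: ghom.
    by move: tC; rewrite inE => /andP[].
  move=> u /imsetP[t tC ->] x /mapP[y yt ->].
  by apply: imset_f; exact: inR_inV tC yt.
split.
  move=> x1 x2 /imsetP[y1 _ ->] /imsetP[y2 _ ->].
  by rewrite !hg => ->.
split.
  rewrite -imset_comp; rewrite (eq_imset _ (g:=id)); last by move=> y /=; rewrite hg.
  by rewrite imset_id.
move=> s t tV; apply/imsetP/idP.
  move=> [t' t'C ->].
  have -> : map_tuple h (map_tuple g t') = t'.
    by apply: eq_from_tnth => i; rewrite !tnth_map hg.
  done.
move=> ht; exists (map_tuple h t) => //.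
apply: eq_from_tnth => i; rewrite !tnth_map.
have /tV /imsetP[y _ ->] : tnth t i \in t by apply: mem_tnth.
by rewrite hg.
Qed.

End P.

Theorem proposition6p1 (sigma : finType) (ar : sigma -> nat) (A B : struc ar)
    (h : sV A -> sV B) (hhom : is_hom h) :
  ~ retraction h <->
  exists n : node B, valid_node n /\
    forall (VD : {set sV A}) (RD : forall s, {set (ar s).-tuple (sV A)}),
      is_substr VD RD -> ~ restr_iso h VD RD (compV n) (compR n).
Proof.
split; last first.
  move=> [n [_ Hn]] hr.
  have [VD [RD [H1 H2]]] := dir1 n hr.
  exact: Hn VD RD H1 H2.
move=> nr; apply: NNPP => Hne; apply: nr.
have H : forall n : node B, valid_node n ->
    exists p : {set sV A} * (forall s, {set (ar s).-tuple (sV A)}),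
      is_substr p.1 p.2 /\ restr_iso h p.1 p.2 (compV n) (compR n).
  move=> n vn; apply: NNPP => hn; apply: Hne; exists n; split => //.
  move=> VD RD sub iso; apply: hn; by exists (VD, RD).
pose Dn (n : node B) (vn : valid_node n) := proj1_sig (constructive_indefinite_description _ (H n vn)).
have DnP : forall n vn, is_substr (Dn n vn).1 (Dn n vn).2 /\
    restr_iso h (Dn n vn).1 (Dn n vn).2 (compV n) (compR n).
  by move=> n vn; rewrite /Dn; case: constructive_indefinite_description.
pose r (y : sV B) := odflt y [pick z | connect (@inc _ _ B) (inl z) (inl y)].
have rP : forall y, connect (@inc _ _ B) (inl (r y)) (inl y).
  move=> y; rewrite /r; case: pickP => [z //|Hn].
  by have := Hn y; rewrite connect0.
have rE : forall y1 y2, connect (@inc _ _ B) (inl y1) (inl y2) -> r y1 = r y2.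
  move=> y1 y2 c; rewrite /r.
  have -> : [pick z | connect (@inc _ _ B) (inl z) (inl y1)] =
            [pick z | connect (@inc _ _ B) (inl z) (inl y2)].
    apply: eq_pick => z /=.
    apply/idP/idP => cz.
      exact: connect_trans cz c.
    by apply: connect_trans cz _; rewrite connect_sym_inc.
  case: pickP => [z //|Hn].
  by have := Hn y2; rewrite connect0.
pose D (y : sV B) := Dn (inl (r y)) isT.
have gex : forall y, exists x, x \in (D y).1 /\ h x = y.
  move=> y; have [_ [_ [him _]]] := DnP (inl (r y)) isT.
  have : y \in h @: (D y).1 by rewrite /D him inE.
  move=> yin; case/imsetP: yin => x xD e; exists x; split => //; by rewrite e.
pose g y := proj1_sig (constructive_indefinite_description _ (gex y)).
have gP : forall y, g y \in (D y).1 /\ h (g y) = y.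
  by move=> y; rewrite /g; case: constructive_indefinite_description.
exists g; split; last by move=> y; case: (gP y).
move=> s t tR.
pose nt : node B := inr (Tagged (fun s => (ar s).-tuple (sV B)) t).
have vt : valid_node nt by [].
have hgt : map_tuple h (map_tuple g t) = t.
  by apply: eq_from_tnth => i; rewrite !tnth_map; case: (gP (tnth t i)).
have key : forall n (vn : valid_node n), t \in compR n s ->
    (forall x, x \in map_tuple g t -> x \in (Dn n vn).1) ->
    map_tuple g t \in sR A s.
  move=> n vn tC Hx.
  have [[sub _] [_ [_ [_ iso]]]] := (DnP n vn, DnP n vn).
  have := sub s => -[/subsetP subs _]; apply: subs.
  by rewrite (iso s _ Hx) hgt.
case: (boolP (0 < ar s)) => [pos|].
  pose y0 := tnth t (Ordinal pos).
  have y0t : y0 \in t by apply: mem_tnth.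
  have cy : forall y, y \in t -> connect (@inc _ _ B) (inl y) (inr (Tagged (fun s => (ar s).-tuple (sV B)) t)).
    by move=> y yt; apply: connect1 => /=; rewrite /is_block /= tR.
  have rt : forall y, y \in t -> r y = r y0.
    move=> y yt; apply: rE; apply: connect_trans (cy y yt) _.
    by rewrite connect_sym_inc; apply: cy.
  apply: (key (inl (r y0)) isT).
    rewrite inE tR /=; apply: connect_trans (rP y0) _; exact: cy.
  move=> x /mapP[y yt ->]; case: (gP y) => gD _.
  by move: gD; rewrite /D (rt y yt).
rewrite -eqn0Ngt => /eqP a0.
apply: (key nt vt); first by rewrite inE tR /= connect0.
move=> x /mapP[y yt _]; exfalso.
have e := size0nil (etrans (size_tuple t) a0).
by move: yt; rewrite e.
Qed.
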